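(* Let $q \geq 5$ be a prime power and let $\mathcal{X}$ be a plane curve of degree $q-1$ defined over $\mathbb{F}_q$ without $\mathbb{F}_q$-linear components with $\mathrm{N}_q(\mathcal{X}) = (q-1)^2$. Let $i, j$ be (not necessarily distinct) non-negative integers and suppose $l_1, l_2$ are distinct lines defined over $\mathbb{F}_q$ with $\#(l_1 \cap \mathcal{X}(\mathbb{F}_q)) = i$ and $\#(l_2 \cap \mathcal{X}(\mathbb{F}_q)) = j$. If the point $P = l_1 \cap l_2$ lies in $\mathcal{X}(\mathbb{F}_q)$, then $i + j \geq q$.
   Context: $\mathcal{X}(\mathbb{F}_q)=\mathcal{X}\cap\mathbb{P}^2(\mathbb{F}_q)$, $\mathrm{N}_q(\mathcal{X})=\#\mathcal{X}(\mathbb{F}_q)$; ''without $\mathbb{F}_q$-linear components'' means no line defined over $\mathbb{F}_q$ is a component of $\mathcal{X}$. *)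

(* Defs.v *)
From HB Require Import structures.
From mathcomp Require Import all_boot all_order all_algebra all_field.
From mathcomp Require Import mpoly.
Set Implicit Arguments. Unset Strict Implicit. Unset Printing Implicit Defensive.
Import GRing.Theory.
Local Open Scope ring_scope.

Section PlaneCurves.
Variable F : finFieldType.

Definition coord3 := {ffun 'I_3 -> F}.

(* Canonical representative of a point of P^2(F): nonzero, and its first
   nonzero coordinate equals 1.  Each point of P^2(F) has exactly one such
   representative, so P^2(F) is identified with [set v | normalized v]. *)
Definition normalized (v : coord3) : bool :=
  [exists i : 'I_3, (v i == 1) && [forall j : 'I_3, (j < i)%N ==> (v j == 0)]].

Definition linform (a : coord3) : {mpoly F[3]} := \sum_(i < 3) a i *: 'X_i.

(* A line of P^2 defined over F, given by its normalized coefficient vector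
   (distinct lines <-> distinct normalized coefficient vectors).
   Point v lies on line a. *)
Definition on_line (a v : coord3) : bool := \sum_(i < 3) a i * v i == 0.

Definition rat_points (f : {mpoly F[3]}) : {set coord3} :=
  [set v : coord3 | normalized v && (f.@[v] == 0)].

Definition line_count (f : {mpoly F[3]}) (a : coord3) : nat :=
  #|[set v in rat_points f | on_line a v]|.

Definition has_rat_linear_component (f : {mpoly F[3]}) : Prop :=
  exists a : coord3, normalized a /\ exists g : {mpoly F[3]}, f = linform a * g.

End PlaneCurves.

(* Main.v *)
Require Import Defs.
From HB Require Import structures.
From mathcomp Require Import all_boot all_order all_algebra all_field.
From mathcomp Require Import mpoly.
From mathcomp Require Import ring zify.
Import GRing.Theory.
Local Open Scope ring_scope.
Set Implicit Arguments. Unset Strict Implicit. Unset Printing Implicit Defensive.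
Set Implicit Arguments. Unset Strict Implicit. Unset Printing Implicit Defensive.
Section Null.
Variable F : finFieldType.

Definition mtl n (m : 'X_{1..n.+1}) : 'X_{1..n} := [multinom m (lift ord0 i) | i < n].

Definition vext n (t : F) (v : 'I_n -> F) : 'I_n.+1 -> F :=
  fun i => if unlift ord0 i is Some j then v j else t.

Lemma vext0 n t (v : 'I_n -> F) : vext t v ord0 = t.
Proof. by rewrite /vext unlift_none. Qed.

Lemma vextS n t (v : 'I_n -> F) j : vext t v (lift ord0 j) = v j.
Proof. by rewrite /vext liftK. Qed.

Definition ccoef n (p : {mpoly F[n.+1]}) (j : nat) : {mpoly F[n]} :=
  \sum_(m <- msupp p | m ord0 == j) p@_m *: 'X_[mtl m].

Lemma mtl_inj n (m m' : 'X_{1..n.+1}) : m ord0 = m' ord0 -> mtl m = mtl m' -> m = m'.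
Proof.
move=> h0 ht; apply/mnmP => i; case: (unliftP ord0 i) => [j ->|->] //.
by have := congr1 (fun x : 'X_{1..n} => x j) ht; rewrite /mtl !mnmE.
Qed.

Lemma ccoef_coef n (p : {mpoly F[n.+1]}) m :
  m \in msupp p -> (ccoef p (m ord0))@_(mtl m) = p@_m.
Proof.
move=> hm; rewrite /ccoef raddf_sum /=.
rewrite big_mkcond (bigD1_seq m) //=.

rewrite eqxx /= mcoeffZ mcoeffX eqxx mulr1 big1 ?addr0 //.
move=> m' hne; case: eqP => [h0|]; last by [].
rewrite mcoeffZ mcoeffX.
case: eqP => [ht|]; last by rewrite mulr0.
by rewrite (mtl_inj h0 ht) eqxx in hne.
Qed.

Lemma ccoef_supp n (p : {mpoly F[n.+1]}) j m' :
  m' \in msupp (ccoef p j) -> exists2 m, m \in msupp p & m' = mtl m.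
Proof.
move=> /msupp_sum_le /flattenP [s /mapP [m]].
rewrite mem_filter => /andP [_ hm] -> /msuppZ_le.
by rewrite msuppX inE => /eqP ->; exists m.
Qed.

Lemma meval_ccoef n (p : {mpoly F[n.+1]}) (t : F) (v : 'I_n -> F) :
  (forall m, m \in msupp p -> (m ord0 < #|F|)%N) ->
  p.@[vext t v] = \sum_(j < #|F|) (ccoef p j).@[v] * t ^+ j.
Proof.
move=> hb.
have E j : (ccoef p j).@[v] = \sum_(m <- msupp p | m ord0 == j)
     p@_m * \prod_(i < n) v i ^+ m (lift ord0 i).
  rewrite /ccoef raddf_sum; apply: eq_bigr => m _.
  rewrite /= mevalZ mevalX; congr (_ * _); apply: eq_bigr => i _; by rewrite mnmE.
rewrite (eq_bigr (fun j : 'I_#|F| => \sum_(m <- msupp p) (if m ord0 == j then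
   p@_m * \prod_(i < n) v i ^+ m (lift ord0 i) * t ^+ j else 0))); last first.
  move=> j _; rewrite E big_mkcond mulr_suml; apply: eq_bigr => m _.
  by case: eqP; rewrite ?mul0r.
rewrite exchange_big /= mevalE; apply: eq_big_seq => m hm.
rewrite [RHS](bigD1 (Ordinal (hb m hm))) //= eqxx [X in _ + X]big1 ?addr0; last first.
  move=> j hj; case: (m ord0 =P j) => // h; exfalso; move: hj; apply/negP/negPn.
  by apply/eqP; apply: val_inj; rewrite /= h.
rewrite big_ord_recl vext0 mulrAC mulrA; congr (_ * _ * _).
by apply: eq_bigr => i _; rewrite vextS.
Qed.

Lemma mnm0_eq (m m' : 'X_{1..0}) : m = m'.
Proof. by apply/mnmP => -[]. Qed.

Lemma nullst n (p : {mpoly F[n]}) :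
  (forall m, m \in msupp p -> forall i, (m i < #|F|)%N) ->
  (forall v, p.@[v] = 0) -> p = 0.
Proof.
elim: n p => [|n IH] p hb hv.
  apply/mpolyP => m; rewrite mcoeff0.
  case: (boolP (m \in msupp p)) => hm; last exact: memN_msupp_eq0.
  have := hv (fun _ => 0); rewrite mevalE (bigD1_seq m) //= [X in _ + X]big1 ?addr0.
    by rewrite big_ord0 mulr1.
  by move=> m'; rewrite (mnm0_eq m' m) eqxx.
have hbig j : (#|F| <= j)%N -> ccoef p j = 0.
  move=> hj; rewrite /ccoef big1_seq // => m /andP [/eqP hmj hm].
  by have := hb m hm ord0; rewrite hmj ltnNge hj.
have hc j : ccoef p j = 0.
  case: (ltnP j #|F|) => hj; last exact: hbig.
  apply: IH.
    by move=> m' /ccoef_supp [m hm ->] i; rewrite mnmE; apply: hb.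
  move=> v.
  pose Q := \poly_(k < #|F|) (ccoef p k).@[v].
  have HQ : Q = 0.
    apply/eqP; apply: contraT => hQ.
    have := max_poly_roots hQ (rs := enum F).
    rewrite enum_uniq -cardE.
    have -> : all (root Q) (enum F).
      apply/allP => x _; rewrite /root /Q horner_poly.
      by rewrite -meval_ccoef ?hv // => m hm; apply: hb.
    by move=> /(_ isT isT); rewrite ltnNge size_poly.
  by have := congr1 (fun P : {poly F} => P`_j) HQ; rewrite coef_poly hj coef0.
apply/mpolyP => m; rewrite mcoeff0.
case: (boolP (m \in msupp p)) => hm; last exact: memN_msupp_eq0.
by rewrite -ccoef_coef // hc mcoeff0.
Qed.
End Null.
Section Homog.
Variable R : comRingType.

Lemma homog_scale n d (p : {mpoly R[n]}) (c : R) (v : 'I_n -> R) :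
  p \is d.-homog -> p.@[fun i => c * v i] = c ^+ d * p.@[v].
Proof.
move=> /dhomogP hp; rewrite !mevalE mulr_sumr; apply: eq_big_seq => m hm.
rewrite mulrCA; congr (_ * _).
under eq_bigr => i _ do rewrite exprMn.
rewrite big_split /= -(hp m hm); congr (_ * _).
by rewrite prodrXr; congr (_ ^+ _); symmetry; exact: mdegE.
Qed.

Lemma mnm_le_mdeg n (m : 'X_{1..n}) i : (m i <= mdeg m)%N.
Proof. by rewrite mdegE (bigD1 i) //= leq_addr. Qed.

Lemma homog_exps n d (p : {mpoly R[n]}) m i :
  p \is d.-homog -> m \in msupp p -> (m i <= d)%N.
Proof. by move=> /dhomogP hp hm; rewrite -(hp m hm) mnm_le_mdeg. Qed.

Lemma dhomogXi n (i : 'I_n) : ('X_i : {mpoly R[n]}) \is 1.-homog.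
Proof. by rewrite dhomogX; apply/eqP; exact: mdeg1. Qed.

Lemma comp_homog n k d (p : {mpoly R[n]}) (lq : n.-tuple {mpoly R[k]}) :
  p \is d.-homog -> (forall i, tnth lq i \is 1.-homog) -> p \mPo lq \is d.-homog.
Proof.
move=> /dhomogP hp hl; rewrite comp_mpolyEX big_seq; apply: rpred_sum => m hm.
apply: rpredZ; rewrite comp_mpolyX.
have <- : (\sum_i m i)%N = d by rewrite -(hp m hm); symmetry; exact: mdegE.
elim: (index_enum _) => [|i s IH]; first by rewrite !big_nil dhomog1.
rewrite !big_cons; apply: dhomogM => //.
by have := dhomogMn (m i) (hl i); rewrite mul1n.
Qed.

Section Ideal.
Variables (n : nat) (L : {mpoly R[n]}).
Definition inI (z : {mpoly R[n]}) := exists g, z = L * g.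

Lemma inI_mul x y x' y' : inI (x - y) -> inI (x' - y') -> inI (x * x' - y * y').
Proof.
move=> [g1 h1] [g2 h2]; exists (x * g2 + g1 * y').
have -> : x * x' - y * y' = x * (x' - y') + (x - y) * y' by ring.
by rewrite h1 h2; ring.
Qed.

Lemma inI_exp x y k : inI (x - y) -> inI (x ^+ k - y ^+ k).
Proof.
move=> h; elim: k => [|k IH]; first by exists 0; rewrite !expr0 subrr mulr0.
by rewrite !exprS; apply: inI_mul.
Qed.

Lemma inI_prod (I : Type) (s : seq I) (x y : I -> {mpoly R[n]}) :
  (forall i, inI (x i - y i)) -> inI (\prod_(i <- s) x i - \prod_(i <- s) y i).
Proof.
move=> h; elim: s => [|a s IH]; first by exists 0; rewrite !big_nil subrr mulr0.
by rewrite !big_cons; apply: inI_mul.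
Qed.

Lemma ideal_comp (lq : n.-tuple {mpoly R[n]}) :
  (forall i, inI ('X_i - tnth lq i)) -> forall p, inI (p - (p \mPo lq)).
Proof.
move=> hl; elim/mpolyind => [|c m p _ _ [g hg]].
  by exists 0; rewrite comp_mpoly0 subr0 mulr0.
have [g' hg'] : inI ('X_[m] - ('X_[m] \mPo lq)).
  rewrite comp_mpolyX mpolyXE_id; apply: inI_prod => i; exact: inI_exp.
exists (c *: g' + g).
rewrite comp_mpolyD comp_mpolyZ.
have -> : c *: 'X_[m] + p - (c *: ('X_[m] \mPo lq) + (p \mPo lq)) =
  c *: ('X_[m] - ('X_[m] \mPo lq)) + (p - (p \mPo lq)) by rewrite scalerBr; ring.
by rewrite hg' hg scalerAr mulrDr.
Qed.
End Ideal.
End Homog.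
Section Three.
Variable F : finFieldType.
Implicit Types (u v a b : coord3 F).

Definition i0 : 'I_3 := @Ordinal 3 0 isT.
Definition i1 : 'I_3 := @Ordinal 3 1 isT.
Definition i2 : 'I_3 := @Ordinal 3 2 isT.

Lemma ord3P (i : 'I_3) : [\/ i = i0, i = i1 | i = i2].
Proof.
case: i => [[|[|[|k]]] hk] //.
- by apply: Or31; apply: val_inj.
- by apply: Or32; apply: val_inj.
- by apply: Or33; apply: val_inj.
Qed.

Lemma sum3 (g : 'I_3 -> F) : \sum_i g i = g i0 + g i1 + g i2.
Proof.
rewrite !big_ord_recl big_ord0 addr0 addrA /=.
by congr (g _ + g _ + g _); apply: val_inj.
Qed.

Lemma normP v : normalized v <->
  [\/ v i0 = 1, v i0 = 0 /\ v i1 = 1 | [/\ v i0 = 0, v i1 = 0 & v i2 = 1]].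
Proof.
split.
  case/existsP => i /andP [/eqP hi /forallP hj].
  have z (j : 'I_3) : (j < i)%N -> v j = 0 by move=> h; apply/eqP/(implyP (hj j)).
  case: (ord3P i) => hI; subst i.
  - by apply: Or31.
  - by apply: Or32; split => //; apply: z.
  - by apply: Or33; split => //; apply: z.
case=> [h|[h0 h1]|[h0 h1 h2]]; apply/existsP.
- by exists i0; rewrite h eqxx; apply/forallP => -[[|k] hk].
- exists i1; rewrite h1 eqxx; apply/forallP => -[[|[|k]] hk] //=.
  by apply/eqP; rewrite -h0; congr (v _); apply: val_inj.
- exists i2; rewrite h2 eqxx; apply/forallP => -[[|[|[|k]]] hk] //=.
  + by apply/eqP; rewrite -h0; congr (v _); apply: val_inj.
  + by apply/eqP; rewrite -h1; congr (v _); apply: val_inj.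
Qed.

Lemma ffun3 u v : u i0 = v i0 -> u i1 = v i1 -> u i2 = v i2 -> u = v.
Proof. by move=> h0 h1 h2; apply/ffunP => i; case: (ord3P i) => ->. Qed.

Lemma F10 : (1 : F) <> 0. Proof. by apply/eqP; rewrite oner_eq0. Qed.

Lemma norm_prop u v c : normalized u -> normalized v ->
  (forall i, u i = c * v i) -> u = v.
Proof.
move=> hu hv H; have e0 := H i0; have e1 := H i1; have e2 := H i2.
suff hc : c = 1 by apply: ffun3; rewrite ?e0 ?e1 ?e2 hc mul1r.
case/normP: hu => [a0|[a0 a1]|[a0 a1 a2]]; case/normP: hv => [b0|[b0 b1]|[b0 b1 b2]];
  rewrite ?a0 ?a1 ?a2 ?b0 ?b1 ?b2 ?mulr1 ?mulr0 in e0 e1 e2;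
  try (match goal with H : _ = c |- _ => subst c end);
  try rewrite mul0r in e0; try rewrite mul0r in e1; try rewrite mul0r in e2;
  first [ done | exfalso; apply: F10; done ].
Qed.

Lemma normalize v : (exists i, v i != 0) ->
  exists n, normalized n /\ exists2 mu, mu != 0 & forall i, v i = mu * n i.
Proof.
move=> hex.
pose nk (k : 'I_3) := [ffun i => v i / v k].
have hnk k : v k != 0 -> exists2 mu, mu != 0 & forall i, v i = mu * nk k i.
  by move=> hk; exists (v k) => // i; rewrite ffunE mulrC divfK.
have hkk k : v k != 0 -> nk k k = 1 by move=> hk; rewrite ffunE divff.
case: (eqVneq (v i0) 0) => h0; last by exists (nk i0); split; [apply/normP; apply: Or31; apply: hkk | apply: hnk].
case: (eqVneq (v i1) 0) => h1.
  case: (eqVneq (v i2) 0) => h2.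
    by exfalso; case: hex => i; case: (ord3P i) => ->; rewrite ?h0 ?h1 ?h2 eqxx.
  exists (nk i2); split; last exact: hnk.
  by apply/normP; apply: Or33; rewrite ?hkk // !ffunE ?h0 ?h1 mul0r.
exists (nk i1); split; last exact: hnk.
by apply/normP; apply: Or32; rewrite ?hkk // !ffunE ?h0 mul0r.
Qed.

Lemma on_lineE a v : on_line a v = (a i0 * v i0 + a i1 * v i1 + a i2 * v i2 == 0).
Proof. by rewrite /on_line sum3. Qed.

Lemma normal_nz v : normalized v -> exists i, v i != 0.
Proof.
by case/normP => [h|[_ h]|[_ _ h]]; [exists i0|exists i1|exists i2]; rewrite h oner_eq0.
Qed.

Lemma eqz (x y e : F) : e = 0 -> (x - y = e \/ y - x = e) -> x = y.
Proof.
move=> -> [] /eqP; rewrite subr_eq0 => /eqP // ->.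
Qed.

Ltac solve1 z := apply: (eqz z); (by left; ring) || (by right; ring).
Ltac solve3 z0 z1 z2 := solve [ solve1 z0 | solve1 z1 | solve1 z2 ].

Lemma line_through P v : normalized P -> normalized v -> P != v ->
  exists a, [/\ normalized a, on_line a P & on_line a v].
Proof.
move=> hP hv hne.
pose c : coord3 F := [ffun i => if i == i0 then P i1 * v i2 - P i2 * v i1
  else if i == i1 then P i2 * v i0 - P i0 * v i2 else P i0 * v i1 - P i1 * v i0].
have c0 : c i0 = P i1 * v i2 - P i2 * v i1 by rewrite ffunE.
have c1 : c i1 = P i2 * v i0 - P i0 * v i2 by rewrite ffunE.
have c2 : c i2 = P i0 * v i1 - P i1 * v i0 by rewrite ffunE.
have hc : exists i, c i != 0.
  apply/existsP; apply: contraT; rewrite negb_exists => /forallP hz.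
  have z i : c i = 0 by apply/eqP; move: (hz i); rewrite negbK.
  have z0 := z i0; have z1 := z i1; have z2 := z i2.
  rewrite c0 in z0; rewrite c1 in z1; rewrite c2 in z2.
  suff : P = v by move/eqP; rewrite (negbTE hne).
  case/normP: (hP) => [a0|[a0 a1]|[a0 a1 a2]]; rewrite ?a0 ?a1 ?a2 in z0 z1 z2.
  - apply/esym/(norm_prop (c := v i0)) => // i.
    by case: (ord3P i) => ->; rewrite ?a0 ?mulr1 //; solve3 z0 z1 z2.
  - apply/esym/(norm_prop (c := v i1)) => // i.
    by case: (ord3P i) => ->; rewrite ?a0 ?a1 ?mulr1 ?mulr0 //; solve3 z0 z1 z2.
  - apply/esym/(norm_prop (c := v i2)) => // i.
    by case: (ord3P i) => ->; rewrite ?a0 ?a1 ?a2 ?mulr1 ?mulr0 //; solve3 z0 z1 z2.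
case: (normalize hc) => a [ha [mu hmu hca]].
have hac i : a i = mu^-1 * c i by rewrite hca mulKf.
exists a; split => //; rewrite on_lineE !hac c0 c1 c2; apply/eqP; ring.
Qed.

Definition lineset b := [set v | normalized v && on_line b v].

Lemma line_card_gen b (k j1 j2 : 'I_3) :
  (forall i, [\/ i = k, i = j1 | i = j2]) ->
  (forall v, on_line b v = (v k + b j1 * v j1 + b j2 * v j2 == 0)) ->
  (#|lineset b| <= #|F|.+1)%N.
Proof.
move=> hI hL.
pose phi (v : coord3 F) : option F := if v j1 == 0 then None else Some (v j2 / v j1).
have hk v : v \in lineset b -> v k = - (b j1 * v j1 + b j2 * v j2).
  rewrite inE hL => /andP [_ /eqP h]; apply/eqP; rewrite -subr_eq0 opprK; apply/eqP.
  by rewrite -h; ring.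
have inj : {in lineset b &, injective phi}.
  move=> v w hv hw; have hvk := hk v hv; have hwk := hk w hw.
  move: hv hw; rewrite !inE => /andP [nv _] /andP [nw _].
  rewrite /phi; case: (eqVneq (v j1) 0) => h1; case: (eqVneq (w j1) 0) => h1' hphi;
    [ | by [] | by [] | case: hphi => hr].
    have hw2 : w j2 != 0.
      apply/negP => /eqP h2; case: (normal_nz nw) => i; case: (hI i) => ->.
      - by rewrite hwk h1' h2 !mulr0 addr0 oppr0 eqxx.
      - by rewrite h1' eqxx.
      - by rewrite h2 eqxx.
    apply: (norm_prop (c := v j2 / w j2)) => // i; case: (hI i) => ->.
    - rewrite hvk hwk h1 h1' !mulr0 !add0r; field; exact: hw2.
    - by rewrite h1 h1' mulr0.
    - by rewrite divfK.
  apply: (norm_prop (c := v j1 / w j1)) => // i.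
  have hv2 : v j2 = (v j2 / v j1) * v j1 by rewrite divfK.
  have hw2 : w j2 = (v j2 / v j1) * w j1 by rewrite hr divfK.
  case: (hI i) => ->.
  - by rewrite hvk hwk hw2 {1}hv2; field; rewrite h1 h1'.
  - by field.
  - by rewrite hw2 {1}hv2; field; rewrite h1 h1'.
rewrite -(card_in_imset inj); apply: leq_trans (max_card _) _.
by rewrite card_option.
Qed.

Lemma line_card b : normalized b -> (#|lineset b| <= #|F|.+1)%N.
Proof.
case/normP => [a0|[a0 a1]|[a0 a1 a2]].
- apply: (line_card_gen (k := i0) (j1 := i1) (j2 := i2)).
    by move=> i; case: (ord3P i) => ->; [apply: Or31|apply: Or32|apply: Or33].
  by move=> v; rewrite on_lineE a0 mul1r.
- apply: (line_card_gen (k := i1) (j1 := i0) (j2 := i2)).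
    by move=> i; case: (ord3P i) => ->; [apply: Or32|apply: Or31|apply: Or33].
  by move=> v; rewrite on_lineE a0 a1; congr (_ == 0); ring.
- apply: (line_card_gen (k := i2) (j1 := i0) (j2 := i1)).
    by move=> i; case: (ord3P i) => ->; [apply: Or32|apply: Or33|apply: Or31].
  by move=> v; rewrite on_lineE a0 a1 a2; congr (_ == 0); ring.
Qed.
End Three.
Section KL.
Variable F : finFieldType.
Local Notation d := (#|F|.-1).

Lemma cardF : #|F| = d.+1.
Proof. by rewrite prednK //; apply/card_gt0P; exists 0. Qed.

Lemma expd (x : F) : x != 0 -> x ^+ d = 1.
Proof.
move=> hx; have := expf_card x; rewrite cardF exprS => h.
by apply: (mulfI hx); rewrite h mulr1.
Qed.

Lemma linform_meval (a : coord3 F) (v : 'I_3 -> F) :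
  (linform a).@[v] = \sum_i a i * v i.
Proof. by rewrite /linform raddf_sum; apply: eq_bigr => i _; rewrite /= mevalZ mevalXU. Qed.

Lemma linform_homog (a : coord3 F) : linform a \is 1.-homog.
Proof. by rewrite /linform; apply: rpred_sum => i _; apply: dhomogZ; apply: dhomogXi. Qed.

Lemma meval_ffun n (p : {mpoly F[n]}) (g : 'I_n -> F) :
  p.@[ [ffun i => g i] ] = p.@[g].
Proof. by apply: meval_eq => i; rewrite ffunE. Qed.

Lemma homog_zero n (p : {mpoly F[n]}) (v : 'I_n -> F) :
  (1 <= d)%N -> p \is d.-homog -> (forall i, v i = 0) -> p.@[v] = 0.
Proof.
move=> hd hp hv; rewrite -(mul0r (p.@[v])).
have -> : (0 : F) = 0 ^+ d by rewrite expr0n; case: d hd.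
rewrite -(@homog_scale _ _ _ p 0 v hp); apply: meval_eq => i; by rewrite hv mul0r.
Qed.

Lemma prod2 (g : 'I_2 -> F) : \prod_(i < 2) g i = g ord0 * g ord_max.
Proof. by rewrite !big_ord_recl big_ord0 mulr1; congr (g _ * g _); apply: val_inj. Qed.

Lemma vec_zero_or_norm (v : coord3 F) :
  (forall i, v i = 0) \/ exists n, normalized n /\ exists2 mu, mu != 0 & forall i, v i = mu * n i.
Proof.
case: (boolP [exists i, v i != 0]) => [/existsP h|]; first by right; apply: normalize.
by rewrite negb_exists => /forallP h; left => i; apply/eqP; rewrite -[_ == _]negbK h.
Qed.

Lemma bad_point (f : {mpoly F[3]}) (a u w : coord3 F) :
  (1 <= d)%N -> f \is d.-homog -> normalized u -> normalized w -> u != w ->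
  on_line a u -> on_line a w ->
  (forall v, v \in lineset a -> v != w -> f.@[v] = 0) -> f.@[w] = 0.
Proof.
move=> hd hf nu nw huw hau haw hz.
pose tau : 3.-tuple {mpoly F[2]} := [tuple u i *: 'X_(ord0) + w i *: 'X_(ord_max) | i < 3].
pose G := f \mPo tau.
have hG y : G.@[y] = f.@[fun i => u i * y ord0 + w i * y ord_max].
  rewrite comp_mpoly_meval; apply: meval_eq => i.
  by rewrite tnth_mktuple mevalD !mevalZ !mevalXU.
have Ghom : G \is d.-homog.
  apply: comp_homog => // i; rewrite tnth_mktuple.
  by apply: rpredD; apply: dhomogZ; apply: dhomogXi.
pose m1 : 'X_{1..2} := [multinom (if i == ord0 then 0 else d)%N | i < 2].
pose m2 : 'X_{1..2} := [multinom d | i < 2].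
pose G' := G - f.@[w] *: ('X_[m1] - 'X_[m2]).
have hG' : G' = 0.
  apply: nullst.
    move=> m /msuppB_le; rewrite mem_cat => /orP [hm|/msuppZ_le/msuppB_le].
      by move=> i; rewrite cardF ltnS; apply: homog_exps Ghom hm.
    rewrite mem_cat !msuppX !inE => /orP [] /eqP -> i; rewrite mnmE cardF ltnS //.
    by case: (i == ord0).
  move=> y; rewrite /G' mevalB mevalZ mevalB !mevalX !prod2 !mnmE eqxx /=.
  rewrite hG expr0 mul1r.
  have e0 : (0 : F) ^+ d = 0 by rewrite expr0n eqn0Ngt hd.
  case: (eqVneq (y ord0) 0) => hy0.
    rewrite hy0 e0 mul0r subr0.
    rewrite (meval_eq (v2 := fun i => y ord_max * w i)); last by move=> i; rewrite mulr0 add0r mulrC.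
    by rewrite (homog_scale _ _ hf); ring.
  rewrite (expd hy0) mul1r subrr mulr0 subr0.
  set z := fun i => _.
  case: (vec_zero_or_norm [ffun i => z i]) => [hz0|[n [nn [mu hmu hzn]]]].
    rewrite -meval_ffun; apply: (homog_zero hd hf) => i; exact: hz0.
  rewrite -meval_ffun (meval_eq (v2 := fun i => mu * n i)) // (homog_scale _ _ hf).
  have hln : on_line a n.
    move: hau haw; rewrite /on_line => /eqP hau /eqP haw.
    have : \sum_i a i * [ffun i => z i] i = mu * \sum_i a i * n i.
      by rewrite mulr_sumr; apply: eq_bigr => i _; rewrite hzn mulrCA.
    have -> : \sum_i a i * [ffun i => z i] i = y ord0 * \sum_i a i * u i + y ord_max * \sum_i a i * w i.
      rewrite !mulr_sumr -big_split; apply: eq_bigr => i _; rewrite ffunE /z /=; ring.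
    rewrite hau haw !mulr0 addr0 => /esym/eqP; rewrite mulf_eq0 (negbTE hmu) /=.
    by move=> ->.
  have hnw : n != w.
    apply/negP => /eqP hnw; move/negP: huw; apply; apply/eqP.
    apply: (norm_prop (c := (mu - y ord_max) / y ord0)) => // i.
    have := hzn i; rewrite ffunE /z hnw => e.
    apply: (mulfI hy0); rewrite mulrA mulrCA mulfV // mulr1 mulrBl -e; ring.
  by rewrite hz ?mulr0 // inE nn hln.
have := congr1 (mcoeff m2) hG'; rewrite mcoeff0 /G' mcoeffB mcoeffZ mcoeffB !mcoeffX eqxx.
have -> : (m1 == m2) = false.
  apply/negP => /eqP /(congr1 (fun m : 'X_{1..2} => m ord0)); rewrite /m1 /m2 !mnmE eqxx.
  by case: d hd.
rewrite (dhomog_nemf_coeff Ghom); last first.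
  suff : (mdeg m2 == d) = false by move=> ->.
  rewrite mdegE big_ord_recl big_ord1 !mnmE.
  apply/negbTE/eqP => h; have := congr1 (fun x => x - d)%N h.
  by rewrite addnK subnn => h0; rewrite h0 in hd.
by rewrite sub0r sub0r mulrN opprK => /eqP; rewrite mulr1 => /eqP.
Qed.

Lemma KL (f : {mpoly F[3]}) (a : coord3 F) :
  (1 <= d)%N -> f \is d.-homog -> normalized a ->
  (#|F| <= line_count f a)%N -> exists g, f = linform a * g.
Proof.
move=> hd hf na hc.
set Z := [set v in rat_points f | on_line a v].
have hcz : line_count f a = #|Z| by [].
have hZL : Z \subset lineset a.
  by apply/subsetP => v; rewrite !inE => /andP [/andP [nv _] hl]; rewrite nv hl.
have hall v : v \in lineset a -> f.@[v] = 0.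
  move: v => w hw; apply/eqP; apply: contraT => hfw.
  have hZw : Z \subset lineset a :\ w.
    apply/subsetP => v hv; rewrite !inE; have := subsetP hZL v hv; rewrite inE => /andP [-> ->]; rewrite !andbT.
    apply/negP => /eqP hvw; move: hv; rewrite !inE hvw (negbTE hfw).
    by rewrite andbF.
  have hcard : (#|lineset a :\ w| <= #|F|)%N.
    have := line_card na; rewrite (cardsD1 w) hw add1n ltnS //.
  have hEq : Z = lineset a :\ w.
    by apply/eqP; rewrite eqEcard hZw /=; apply: leq_trans hcard _; rewrite -hcz.
  have hzero v : v \in lineset a -> v != w -> f.@[v] = 0.
    move=> hv hvw; have : v \in Z by rewrite hEq in_setD1 hvw hv.
    by rewrite !inE => /andP [/andP [_ /eqP ->]].
  have : (0 < #|Z|)%N by rewrite -hcz; apply: leq_trans hc; rewrite cardF.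
  case/card_gt0P => u hu.
  have huw : u != w by move: hu; rewrite hEq !inE => /andP [].
  move: (hu) (hw); rewrite hEq !inE => /andP [_ /andP [nu hau]] /andP [nw haw].
  by rewrite (bad_point hd hf nu nw huw hau haw hzero) eqxx in hfw.
have hplane (v : coord3 F) : on_line a v -> f.@[v] = 0.
  case: (vec_zero_or_norm v) => [h0|[n [nn [mu hmu hvn]]]] hv.
    exact: homog_zero.
  rewrite (meval_eq (v2 := fun i => mu * n i)) // (homog_scale _ _ hf) hall ?mulr0 //.
  rewrite inE nn /=; move: hv; rewrite /on_line.
  have -> : \sum_i a i * v i = mu * \sum_i a i * n i.
    by rewrite mulr_sumr; apply: eq_bigr => i _; rewrite hvn mulrCA.
  by rewrite mulf_eq0 (negbTE hmu).
have [e he] : exists e : coord3 F, \sum_i a i * e i = 1.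
  case: (normal_nz na) => i hi; exists [ffun j => if j == i then (a i)^-1 else 0].
  rewrite (bigD1 i) //= ffunE eqxx mulfV // big1 ?addr0 // => j hj.
  by rewrite ffunE (negbTE hj) mulr0.
pose sig : 3.-tuple {mpoly F[3]} := [tuple 'X_i - e i *: linform a | i < 3].
have hh : f \mPo sig = 0.
  apply: nullst.
    move=> m hm i; rewrite cardF ltnS; apply: homog_exps hm.
    apply: comp_homog => // i'; rewrite tnth_mktuple.
    by apply: rpredB; [apply: dhomogXi | apply: dhomogZ; apply: linform_homog].
  move=> v; rewrite comp_mpoly_meval -meval_ffun; apply: hplane.
  rewrite /on_line.
  under eq_bigr => i _ do rewrite ffunE tnth_mktuple mevalB mevalZ mevalXU linform_meval mulrBr.
  rewrite sumrB.
  have -> : \sum_i a i * (e i * \sum_i a i * v i) = (\sum_i a i * e i) * \sum_i a i * v i.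
    by rewrite mulr_suml; apply: eq_bigr => i _; rewrite mulrA.
  by rewrite he mul1r subrr.
have hI i : inI (linform a) ('X_i - tnth sig i).
  exists (e i)%:MP; rewrite tnth_mktuple.
  by rewrite opprB addrC subrK -mul_mpolyC mulrC.
have [g hg] := ideal_comp hI f.
by exists g; rewrite -hg hh subr0.
Qed.
End KL.

Lemma card_bigcup_le (I T : finType) (A : {pred I}) (B : I -> {set T}) :
  (#|\bigcup_(a in A) B a| <= \sum_(a in A) #|B a|)%N.
Proof.
apply: (big_ind2 (fun (x : {set T}) y => #|x| <= y)%N) => //.
  by rewrite cards0.
move=> x1 y1 x2 y2 h1 h2; apply: leq_trans (leq_add h1 h2).
by rewrite cardsU leq_subr.
Qed.

Theorem corollary3p5 (F : finFieldType) (f : {mpoly F[3]}) (i j : nat)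
    (l1 l2 P : coord3 F) :
  (5 <= #|F|)%N ->
  f != 0 -> f \is (#|F|.-1).-homog ->
  ~ has_rat_linear_component f ->
  #|rat_points f| = (#|F|.-1 ^ 2)%N ->
  normalized l1 -> normalized l2 -> l1 != l2 ->
  line_count f l1 = i -> line_count f l2 = j ->
  P \in rat_points f -> on_line l1 P -> on_line l2 P ->
  (#|F| <= i + j)%N.
Proof.
move=> h5 _ hf hnl hN n1 n2 h12 hi hj hP o1 o2.
have hq := cardF F.
set d := #|F|.-1 in hq hf hN *.
have hd : (1 <= d)%N by rewrite hq in h5; rewrite -ltnS; apply: leq_trans h5.
have hbound a : normalized a -> (line_count f a <= d)%N.
  move=> na; rewrite leqNgt; apply/negP => h; apply: hnl; exists a; split => //.
  by apply: KL => //; rewrite hq.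
set X := rat_points f.
pose Xa a := [set v in X | on_line a v].
pose A := [set a | normalized a && on_line a P].
have nP : normalized P by move: hP; rewrite inE => /andP [].
have hA : (#|A| <= d.+2)%N.
  have -> : A = lineset P.
    apply/setP => a; rewrite !inE /on_line.
    by congr (_ && (_ == 0)); apply: eq_bigr => k _; rewrite mulrC.
  by rewrite -hq; apply: line_card.
have cover : X :\ P \subset \bigcup_(a in A) (Xa a :\ P).
  apply/subsetP => v; rewrite in_setD1 => /andP [hvP hv].
  have nv : normalized v by move: hv; rewrite inE => /andP [].
  have hPv : P != v by rewrite eq_sym.
  have [a [na haP hav]] := line_through nP nv hPv.
  apply/bigcupP; exists a; first by rewrite inE na haP.
  by rewrite in_setD1 hvP inE hv hav.
have hsum := leq_trans (subset_leq_card cover) (card_bigcup_le _ _).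
have l1A : l1 \in A by rewrite inE n1 o1.
have l2A : l2 \in A :\ l1 by rewrite in_setD1 eq_sym h12 inE n2 o2.
rewrite (big_setD1 l1) //= (big_setD1 l2) //= in hsum.
have hPa a : a \in A -> P \in Xa a by move=> ha; rewrite inE hP; move: ha; rewrite inE => /andP [_ ->].
have hXa a : a \in A -> #|Xa a| = (#|Xa a :\ P|).+1 by move=> ha; rewrite (cardsD1 P) hPa.
have hrest : (\sum_(a in A :\ l1 :\ l2) #|Xa a :\ P| <= #|A :\ l1 :\ l2| * d.-1)%N.
  rewrite -sum_nat_const; apply: leq_sum => a; rewrite !in_setD1 => /andP [_ /andP [_ ha]].
  have hXaa := hXa a ha; have := hbound a; rewrite inE in ha; case/andP: (ha) => na haP.
  move=> /(_ na); rewrite /line_count -/(Xa a) hXaa.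
  by move=> h; rewrite -ltnS prednK.
have e1 : #|X| = (#|X :\ P|).+1 by rewrite (cardsD1 P) hP.
have ei : i = (#|Xa l1 :\ P|).+1 by rewrite -hi -hXa.
have l2A' : l2 \in A by move: l2A; rewrite in_setD1 => /andP [].
have ej : j = (#|Xa l2 :\ P|).+1 by rewrite -hj -hXa.
have eA : #|A| = (#|A :\ l1 :\ l2|).+2.
  by rewrite (cardsD1 l1) l1A (cardsD1 l2 (A :\ l1)) l2A.
move: hsum hrest hA; rewrite eA hq ei ej.
have := e1; rewrite hN => e1'.
move: e1'; rewrite -/X.
set x := #|X :\ P|; set x1 := #|Xa l1 :\ P|; set x2 := #|Xa l2 :\ P|.
set r := #|A :\ l1 :\ l2|; set s := (\sum_(a in _) _)%N.
move=> E hs hr hA'.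
have hrd : (r * d.-1 <= d * d.-1)%N by apply: leq_mul => //; rewrite -ltnS -ltnS.
have hde : d = d.-1.+1 by rewrite prednK.
move: E hs hr hrd; rewrite hde; set e := d.-1 => E hs hr hrd.
nia.
Qed.
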